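(* Let $f$ be a function with $f\notin\mathscr{P}$ but $f^2\in\mathscr{P}$. Then by pinning some variables of $f$ to constants one obtains a function $h$ of rank 2 and essential arity 2 whose compressed function $\underline{h}$ is a binary function with $\underline{h}\notin\mathscr{P}$ and $\underline{h}^2\in\mathscr{P}$. Furthermore, all four values of $\underline{h}$ are nonzero.
   Context: Functions are maps $\{0,1\}^n\to\mathbb{C}$; $f^2$ is the pointwise square. $\mathscr{P}$: products of unary functions, binary equalities $[1,0,1]$ and binary disequalities $[0,1,0]$. Pinning a variable means fixing it to $0$ or $1$. If $h$ has affine support (an affine subspace of $\mathbb{Z}_2^n$) of dimension $r$ (the rank of $h$) with free variables $x_{j_1},\dots,x_{j_r}$, then every variable $x_k$ equals on $\mathrm{supp}(h)$ an affine function $\sum_t d_tx_{j_t}+e$ of the free variables; variables whose linear parts $\sum_t d_tx_{j_t}$ coincide (and are nonzero) form a bundle, and the essential arity is the number of nonempty bundles. The compressed function $\underline{h}(x_{j_1},\dots,x_{j_r})$ is the value of $h$ at the unique point of $\mathrm{supp}(h)$ with these free-variable values. *)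

(* Defs.v *)
From mathcomp Require Import all_boot all_order all_algebra.
From mathcomp Require Import complex.
From mathcomp Require Import reals.
Set Implicit Arguments. Unset Strict Implicit. Unset Printing Implicit Defensive.
Import Order.TTheory GRing.Theory Num.Theory.
Local Open Scope ring_scope.

Section Defs.
Variable R : realType.
Local Notation C := (R[i]).

Definition assign (n : nat) := {ffun 'I_n -> bool}.
Definition fn (n : nat) := assign n -> C.

Definition fsq n (f : fn n) : fn n := fun x => f x ^+ 2.

(* The class P: (a constant multiple of) a product of unary functions,
   binary equalities [1,0,1] and binary disequalities [0,1,0] applied to
   the variables of f. *)
Definition inP n (f : fn n) : Prop :=
  exists (lam : C) (U : seq ('I_n * (bool -> C)))
         (E : seq ('I_n * 'I_n)) (D : seq ('I_n * 'I_n)),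
  forall x : assign n,
    f x = lam * (\prod_(u <- U) u.2 (x u.1))
              * (\prod_(e <- E) ((x e.1 == x e.2)%:R : C))
              * (\prod_(d <- D) ((x d.1 != x d.2)%:R : C)).

(* h (of arity m) is obtained from f (of arity n) by pinning the variables
   outside the image of the injective map sigma to the constants c; the
   j-th variable of h is the variable sigma j of f. *)
Definition pinning n m (f : fn n) (h : fn m) : Prop :=
  exists (sigma : 'I_m -> 'I_n) (c : assign n),
    injective sigma /\
    forall y : assign m,
      h y = f [ffun i => if [pick j | sigma j == i] is Some j then y j else c i].

Definition supp m (h : fn m) : {set assign m} := [set x | h x != 0].

Definition axor m (x y : assign m) : assign m := [ffun i => x i (+) y i].
Definition azero m : assign m := [ffun _ => false].

Definition lin_subspace m (V : {set assign m}) : Prop :=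
  azero m \in V /\ forall u v, u \in V -> v \in V -> axor u v \in V.

Definition affine_subspace m (S : {set assign m}) : Prop :=
  exists (a : assign m) (V : {set assign m}),
    lin_subspace V /\ S = [set axor a v | v in V].

Definition affine_support m (h : fn m) : Prop := affine_subspace (supp h).

Definition lincomb m r (b : 'I_r -> assign m) (s : assign r) : assign m :=
  \big[@axor m / azero m]_(t < r | s t) b t.

Definition affine_dim m (S : {set assign m}) (r : nat) : Prop :=
  exists (a : assign m) (V : {set assign m}) (b : 'I_r -> assign m),
    lin_subspace V /\ S = [set axor a v | v in V] /\
    V = [set lincomb b s | s : assign r] /\ injective (lincomb b).

Definition rank m (h : fn m) (r : nat) : Prop :=
  affine_support h /\ affine_dim (supp h) r.

Definition free_vars m r (h : fn m) (j : 'I_r -> 'I_m) : Prop :=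
  injective j /\
  forall y : assign r, exists! x : assign m,
    x \in supp h /\ forall t, x (j t) = y t.

Definition linpart m r (h : fn m) (j : 'I_r -> 'I_m) (k : 'I_m)
  (d : assign r) : bool :=
  [exists e : bool, forall x in supp h,
     x k == (\big[xorb/false]_(t < r) (d t && x (j t))) (+) e].

(* essential arity: number of bundles = number of distinct nonzero linear
   parts occurring among the variables. *)
Definition ess_arity m r (h : fn m) (j : 'I_r -> 'I_m) : nat :=
  #|[set d : assign r | (d != azero r) && [exists k, linpart h j k d]]|.

Definition compressed m r (h : fn m) (j : 'I_r -> 'I_m) : fn r :=
  fun y => if [pick x in supp h | [forall t, x (j t) == y t]] is Some x
           then h x else 0.

End Defs.

(* Main.v *)
Require Import Defs.
From HB Require Import structures.
From mathcomp Require Import all_boot all_order all_algebra.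
From mathcomp Require Import complex reals.
From mathcomp Require Import ring.
From Stdlib Require Import Classical.
Import Order.TTheory GRing.Theory Num.Theory.
Set Implicit Arguments. Unset Strict Implicit. Unset Printing Implicit Defensive.
From mathcomp Require Import zify.
Local Open Scope ring_scope.

Lemma axorA m : associative (@axor m).
Proof. by move=> x y z; apply/ffunP => i; rewrite !ffunE addbA. Qed.
Lemma axorC m : commutative (@axor m).
Proof. by move=> x y; apply/ffunP => i; rewrite !ffunE addbC. Qed.
Lemma axor0l m : left_id (azero m) (@axor m).
Proof. by move=> x; apply/ffunP => i; rewrite !ffunE. Qed.

HB.instance Definition _ m := Monoid.isComLaw.Build (assign m) (azero m) (@axor m)
  (@axorA m) (@axorC m) (@axor0l m).

Definition o1 : 'I_2 := @Ordinal 2 1 isT.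
Lemma ord2_cases (t : 'I_2) : t = ord0 \/ t = o1.
Proof.
case: t => [[|[|t]] Ht]; [left|right|]; try by apply: val_inj.
by [].
Qed.

Definition mk2 (a b : bool) : assign 2 := [ffun t => if t == ord0 then a else b].
Lemma mk2_0 a b : mk2 a b ord0 = a. Proof. by rewrite ffunE. Qed.
Lemma mk2_1 a b : mk2 a b o1 = b. Proof. by rewrite ffunE. Qed.
Lemma mk2E (y : assign 2) : y = mk2 (y ord0) (y o1).
Proof. apply/ffunP => t; rewrite ffunE; by case: (ord2_cases t) => ->. Qed.
Lemma mk2_inj a b a' b' : mk2 a b = mk2 a' b' -> a = a' /\ b = b'.
Proof.
move=> H; have H0 := congr1 (fun y : assign 2 => y ord0) H.
have H1 := congr1 (fun y : assign 2 => y o1) H.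
by move: H0 H1; rewrite /= !ffunE.
Qed.

Lemma lincomb2 m (b : 'I_2 -> assign m) (s : assign 2) j :
  lincomb b s j = (s ord0 && b ord0 j) (+) (s o1 && b o1 j).
Proof.
rewrite /lincomb big_mkcond big_ord_recl big_ord_recl big_ord0 /=.
have -> : lift ord0 ord0 = o1 :> 'I_2 by apply: val_inj.
rewrite !ffunE; case: (s ord0); case: (s o1) => //=; rewrite ?ffunE ?addbF //.
Qed.

Lemma bigx2 (F : 'I_2 -> bool) : \big[xorb/false]_(t < 2) F t = F ord0 (+) F o1.
Proof.
rewrite big_ord_recl big_ord_recl big_ord0 /=.
have -> : lift ord0 ord0 = o1 :> 'I_2 by apply: val_inj.
by case: (F o1); case: (F ord0).
Qed.

Lemma prod_nat (T : Type) (K : semiRingType) (s : seq T) (P : pred T) :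
  \prod_(p <- s) ((P p)%:R : K) = (all P s)%:R.
Proof.
elim: s => [|a s IH]; first by rewrite big_nil.
by rewrite big_cons IH /=; case: (P a) => /=; rewrite ?mul1r ?mul0r.
Qed.

Lemma prod_ind (K : idomainType) (T : Type) (s : seq T) (F : T -> K) :
  \prod_(t <- s) ((F t != 0)%:R : K) = ((\prod_(t <- s) F t) != 0)%:R.
Proof.
elim: s => [|a s IH]; first by rewrite !big_nil oner_eq0.
rewrite !big_cons IH mulf_eq0 negb_or.
by case: (F a == 0); case: (_ == 0); rewrite /= ?mul1r ?mul0r.
Qed.

Lemma o1_neq0 : (o1 == ord0) = false. Proof. by []. Qed.

Lemma mk2_eq a b a' b' : (mk2 a b == mk2 a' b') = (a == a') && (b == b').
Proof.
apply/eqP/andP => [/mk2_inj [-> ->] | [/eqP -> /eqP ->]] //.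
Qed.

Lemma binP_cross (R : realType) (g : fn R 2) : inP g -> (forall y, g y != 0) ->
  g (mk2 false false) * g (mk2 true true) = g (mk2 false true) * g (mk2 true false).
Proof.
move=> [lam [U [E [D Hg]]]] Hnz.
have Hg' y : g y = lam * \prod_(u <- U) u.2 (y u.1).
  move: (Hnz y); rewrite Hg !prod_nat.
  by case: (all _ E); case: (all _ D); rewrite /= ?mulr1 ?mulr0 ?eqxx.
rewrite !Hg' mulrACA [RHS]mulrACA; congr (_ * _); rewrite -!big_split.
apply: eq_bigr => u _; case: (ord2_cases u.1) => ->; rewrite !ffunE //=.
exact: mulrC.
Qed.

Lemma binP_sq (R : realType) (g : fn R 2) : (forall y, g y != 0) ->
  g (mk2 false false) * g (mk2 true true) = - (g (mk2 false true) * g (mk2 true false)) ->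
  inP (fsq g).
Proof.
move=> Hnz Hc.
have a0 := Hnz (mk2 false false).
exists (g (mk2 false false) ^+ 2),
  [:: (ord0, fun b : bool => if b then g (mk2 true false) ^+ 2 / g (mk2 false false) ^+ 2 else 1);
      (o1, fun b : bool => if b then g (mk2 false true) ^+ 2 / g (mk2 false false) ^+ 2 else 1)],
  [::], [::].
move=> y; rewrite /fsq (mk2E y) !big_cons !big_nil /= !mk2_0 !mk2_1.
have H11 : g (mk2 true true) ^+ 2 =
   g (mk2 false true) ^+ 2 * g (mk2 true false) ^+ 2 / g (mk2 false false) ^+ 2.
  apply: (mulfI (expf_neq0 2 a0)); rewrite -exprMn Hc sqrrN exprMn; field.
  exact: a0.
case: (y ord0); case: (y o1); rewrite ?H11 !(mulr1, mul1r) //.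
- move: (expf_neq0 2 a0); move: (g (mk2 false false) ^+ 2) => A HA.
  by field.
- by rewrite [RHS]mulrC divfK ?expf_neq0.
- by rewrite [RHS]mulrC divfK ?expf_neq0.
Qed.

Section Struct.
Variable R : realType.
Local Notation C := (R[i]).
Variables (n : nat) (f : fn R n) (lam : C) (U : seq ('I_n * (bool -> C)))
  (E D : seq ('I_n * 'I_n)).

Definition Qf (x : assign n) : C := \prod_(u <- U) u.2 (x u.1).
Definition allE (x : assign n) := all (fun p : 'I_n * 'I_n => x p.1 == x p.2) E.
Definition allD (x : assign n) := all (fun p : 'I_n * 'I_n => x p.1 != x p.2) D.

Hypothesis Hsq : forall x, f x ^+ 2 = lam * Qf x * (allE x)%:R * (allD x)%:R.

Lemma inS x : (f x != 0) = [&& lam != 0, Qf x != 0, allE x & allD x].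
Proof.
rewrite -sqrf_eq0 Hsq; case: (allE x); case: (allD x);
  rewrite /= ?mulr1 ?mulr0 ?eqxx ?andbF //= mulf_eq0 negb_or ?andbT //.
Qed.

Definition e : rel 'I_n := fun i k =>
  has (fun p : 'I_n * 'I_n => ((p.1 == i) && (p.2 == k)) || ((p.1 == k) && (p.2 == i))) (E ++ D).

Lemma e_sym : symmetric e.
Proof. by move=> i k; apply: eq_has => p; rewrite orbC. Qed.
Definition csym := sym_connect_sym e_sym.

Definition flip (x : assign n) (A : {set 'I_n}) : assign n := [ffun i => x i (+) (i \in A)].
Definition closedA (A : {set 'I_n}) := forall i k, e i k -> (i \in A) = (k \in A).

Lemma closedA_connect A i k : closedA A -> connect e i k -> (i \in A) = (k \in A).
Proof. by move=> H; apply: closed_connect => x y; apply: H. Qed.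

Lemma edgeE p : p \in E -> e p.1 p.2.
Proof. by move=> Hp; apply/hasP; exists p; rewrite ?mem_cat ?Hp ?eqxx. Qed.
Lemma edgeD p : p \in D -> e p.1 p.2.
Proof. by move=> Hp; apply/hasP; exists p; rewrite ?mem_cat ?Hp ?orbT ?eqxx. Qed.

Lemma K_flipE x A : closedA A -> allE (flip x A) = allE x.
Proof.
move=> H; apply: eq_in_all => p Hp; rewrite !ffunE (H _ _ (edgeE Hp)).
by case: (p.2 \in A); case: (x p.1); case: (x p.2).
Qed.
Lemma K_flipD x A : closedA A -> allD (flip x A) = allD x.
Proof.
move=> H; apply: eq_in_all => p Hp; rewrite !ffunE (H _ _ (edgeD Hp)).
by case: (p.2 \in A); case: (x p.1); case: (x p.2).
Qed.

Lemma diff_closed x y : allE x -> allD x -> allE y -> allD y ->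
  closedA [set i | x i != y i].
Proof.
move=> hEx hDx hEy hDy i k /hasP [p]; rewrite mem_cat => /orP [] Hp Hik; rewrite !inE.
- have := allP hEx p Hp; have := allP hEy p Hp.
  case/orP: Hik => /andP [/eqP <- /eqP <-];
  by case: (x p.1); case: (x p.2); case: (y p.1); case: (y p.2).
- have := allP hDx p Hp; have := allP hDy p Hp.
  case/orP: Hik => /andP [/eqP <- /eqP <-];
  by case: (x p.1); case: (x p.2); case: (y p.1); case: (y p.2).
Qed.

Lemma mixS x z y : f x != 0 -> f z != 0 -> allE y -> allD y ->
  (forall i, y i = x i \/ y i = z i) -> f y != 0.
Proof.
rewrite !inS => /and4P[hl hQx _ _] /and4P[_ hQz _ _] hE hD Hy.
apply/and4P; split => //; move: hQx hQz; rewrite /Qf.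
elim: U => [|u s IH]; rewrite ?big_nil // !big_cons !mulf_eq0 !negb_or.
move=> /andP [h1 h2] /andP [h3 h4]; rewrite IH // andbT.
by case: (Hy u.1) => ->.
Qed.

Lemma flipK x A : flip (flip x A) A = x.
Proof. by apply/ffunP => i; rewrite !ffunE -addbA addbb addbF. Qed.
Lemma flipC x A B : flip (flip x A) B = flip (flip x B) A.
Proof. by apply/ffunP => i; rewrite !ffunE -!addbA (addbC (i \in A)). Qed.

Lemma rootR i : fingraph.root e (fingraph.root e i) = fingraph.root e i.
Proof. exact: root_root csym i. Qed.
Lemma rootC x y : (fingraph.root e x == fingraph.root e y) = connect e x y.
Proof. exact: root_connect csym x y. Qed.

Definition comp r : {set 'I_n} := [set k | connect e r k].

Lemma comp_closed r : closedA (comp r).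
Proof.
move=> i k Hik; rewrite !inE; apply/idP/idP => H.
- exact: connect_trans H (connect1 Hik).
- by apply: connect_trans H (connect1 _); rewrite e_sym.
Qed.

Lemma root_in_comp r k : fingraph.root e r = r -> fingraph.root e k = k -> (k \in comp r) = (k == r).
Proof. by move=> Hr Hk; rewrite inE -rootC Hr Hk eq_sym. Qed.

Lemma comp_root r i : fingraph.root e r = r -> (i \in comp r) = (fingraph.root e i == r).
Proof. by move=> Hr; rewrite inE -{2}Hr rootC (csym r i). Qed.

Lemma Sall x : f x != 0 -> allE x /\ allD x.
Proof. by rewrite inS => /and4P[]. Qed.

Section Mult.
Variable z : assign n.
Hypothesis Hz : f z != 0.

Definition Rset x : {set 'I_n} := [set r | (fingraph.root e r == r) && (x r != z r)].
Definition rho r := f (flip z (comp r)) / f z.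

Lemma diff_root x i : f x != 0 -> (x i != z i) = (x (fingraph.root e i) != z (fingraph.root e i)).
Proof.
move=> Hx; have [hE hD] := Sall Hx; have [zE zD] := Sall Hz.
by have := closedA_connect (diff_closed hE hD zE zD) (connect_root e i); rewrite !inE.
Qed.

Lemma Rset0 x : f x != 0 -> Rset x = set0 -> x = z.
Proof.
move=> Hx H0; apply/ffunP => i; apply/eqP; apply/negPn/negP => Hi.
have : fingraph.root e i \in Rset x by rewrite inE rootR eqxx /= -diff_root.
by rewrite H0 inE.
Qed.

Lemma Rset1 x r : f x != 0 -> Rset x = [set r] -> x = flip z (comp r).
Proof.
move=> Hx H1.
have : r \in Rset x by rewrite H1 set11.
rewrite inE => /andP [/eqP Hr _].
apply/ffunP => i; rewrite ffunE comp_root //.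
have : (x i != z i) = (fingraph.root e i == r).
  rewrite diff_root //.
  have : (fingraph.root e i \in Rset x) = (fingraph.root e i == r) by rewrite H1 inE.
  by rewrite inE rootR eqxx.
by move=> <-; case: (x i); case: (z i).
Qed.

Lemma Rset_flip (x : assign n) r : r \in Rset x -> Rset (flip x (comp r)) = Rset x :\ r.
Proof.
rewrite inE => /andP [/eqP Hr Hxr]; apply/setP => s; rewrite !inE ffunE.
case Hs: (fingraph.root e s == s) => /=; last by rewrite andbF.
rewrite root_in_comp //; last exact/eqP.
case: (eqVneq s r) => [->|_] /=; last by rewrite addbF.
by move: Hxr; case: (x r); case: (z r).
Qed.

Lemma flipS (x : assign n) r : f x != 0 -> r \in Rset x -> f (flip x (comp r)) != 0.
Proof.
move=> Hx Hr; have [hE hD] := Sall Hx.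
move: (Hr); rewrite inE => /andP [/eqP Hrr Hxr].
apply: (mixS Hx Hz); rewrite ?K_flipE ?K_flipD //; try exact: comp_closed.
move=> i; rewrite ffunE; case Hi: (i \in comp r); last by left; rewrite addbF.
right; move: Hi; rewrite comp_root // => /eqP Hi.
have := diff_root i Hx; rewrite Hi Hxr.
by case: (x i); case: (z i).
Qed.

Hypothesis Hsquare : forall w r1 r2, f w != 0 -> ~~ connect e r1 r2 ->
  f (flip w (comp r1)) != 0 -> f (flip w (comp r2)) != 0 ->
  f w * f (flip (flip w (comp r1)) (comp r2)) = f (flip w (comp r1)) * f (flip w (comp r2)).

Lemma mult_all k (x : assign n) : (#|Rset x| <= k)%N -> f x != 0 ->
  f x = f z * \prod_(r in Rset x) rho r.
Proof.
elim: k x => [|k IH] x Hk Hx.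
  move: Hk; rewrite leqn0 => /eqP/cards0_eq H0.
  by rewrite H0 big_set0 mulr1 {1}(Rset0 Hx H0).
case: (ltnP 1 #|Rset x|) => Hc.
- have : Rset x != set0 by rewrite -card_gt0; apply: ltnW.
  case/set0Pn => r1 Hr1.
  have Hc1 : #|Rset x| = #|Rset x :\ r1|.+1 by rewrite (cardsD1 r1) Hr1.
  have : Rset x :\ r1 != set0 by rewrite -card_gt0; move: Hc; rewrite Hc1.
  case/set0Pn => r2 Hr2.
  have Hc2 : #|Rset x :\ r1| = #|Rset x :\ r1 :\ r2|.+1 by rewrite (cardsD1 r2) Hr2.
  move: (Hr2); rewrite in_setD1 => /andP [H21 Hr2x].
  have Hc3 : #|Rset x| = #|Rset x :\ r2|.+1 by rewrite (cardsD1 r2) Hr2x.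
  have Edd : (Rset x :\ r2) :\ r1 = (Rset x :\ r1) :\ r2.
    by apply/setP => s; rewrite !inE andbCA.
  set x1 := flip x (comp r1); set x2 := flip x (comp r2); set x12 := flip x1 (comp r2).
  have R1 : Rset x1 = Rset x :\ r1 by apply: Rset_flip.
  have R2 : Rset x2 = Rset x :\ r2 by apply: Rset_flip.
  have R12 : Rset x12 = (Rset x :\ r1) :\ r2 by rewrite /x12 Rset_flip R1.
  have S1 : f x1 != 0 by apply: flipS.
  have S2 : f x2 != 0 by apply: flipS.
  have S12 : f x12 != 0 by apply: flipS; rewrite // R1.
  move: (Hr1) (Hr2x); rewrite !inE => /andP [/eqP Hrr1 _] /andP [/eqP Hrr2 _].
  have Hnc : ~~ connect e r1 r2 by rewrite -rootC Hrr1 Hrr2 eq_sym.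
  have := Hsquare S12 Hnc.
  have -> : flip x12 (comp r1) = x2 by rewrite /x12 /x1 flipC flipK.
  have -> : flip x12 (comp r2) = x1 by rewrite /x12 flipK.
  have -> : flip x2 (comp r2) = x by rewrite flipK.
  move=> /(_ S2 S1) Hsqr.
  have IH1 := IH x1; rewrite R1 in IH1; have {}IH1 := IH1 ltac:(move: Hk; rewrite Hc1; lia) S1.
  have IH2 := IH x2; rewrite R2 in IH2; have {}IH2 := IH2 ltac:(move: Hk; rewrite Hc3; lia) S2.
  have IH12 := IH x12; rewrite R12 in IH12;
    have {}IH12 := IH12 ltac:(move: Hk; rewrite Hc1 Hc2; lia) S12.
  have Hr12 : r1 \in Rset x :\ r2 by rewrite in_setD1 eq_sym H21 Hr1.
  set P0 := \prod_(r in Rset x :\ r1 :\ r2) rho r.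
  have e1 : \prod_(r in Rset x) rho r = rho r1 * (rho r2 * P0).
    by rewrite (big_setD1 r1 Hr1) (big_setD1 r2 Hr2).
  have e2 : \prod_(r in Rset x :\ r1) rho r = rho r2 * P0.
    by rewrite (big_setD1 r2 Hr2).
  have e3 : \prod_(r in Rset x :\ r2) rho r = rho r1 * P0.
    by rewrite (big_setD1 r1 Hr12) Edd.
  rewrite e2 in IH1; rewrite e3 in IH2; rewrite e1.
  have e4 : \prod_(r in Rset x :\ r1 :\ r2) rho r = P0 by [].
  rewrite e4 in IH12.
  apply: (mulfI S12); rewrite Hsqr IH1 IH2 IH12; ring.
- move: Hc; rewrite leq_eqVlt ltnS leqn0 => /orP [/cards1P [r H1] | /eqP/cards0_eq H0].
  + by rewrite H1 big_set1 {1}(Rset1 Hx H1) /rho mulrC divfK.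
  + by rewrite H0 big_set0 mulr1 {1}(Rset0 Hx H0).
Qed.

Lemma fP : inP f.
Proof.
pose phi i := fun b : bool => if (fingraph.root e i == i) && (b != z i) then rho i else 1.
exists (f z), ([seq (i, phi i) | i <- index_enum 'I_n] ++
   [seq (u.1, fun b => ((u.2 b != 0)%:R : C)) | u <- U]), E, D.
move=> x.
rewrite big_cat /= !big_map /=.
have -> : \prod_(i <- index_enum 'I_n) phi i (x i) = \prod_(r in Rset x) rho r.
  by rewrite [RHS]big_mkcond; apply: eq_bigr => i _; rewrite /phi inE.
rewrite (prod_ind U (fun u => u.2 (x u.1))) !prod_nat -/(Qf x) -/(allE x) -/(allD x).
have hl : lam != 0 by move: Hz; rewrite inS => /and4P [].
case Hx: (f x != 0).
- rewrite {1}(mult_all (leqnn _) Hx).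
  move: Hx; rewrite inS => /and4P [_ -> -> ->] /=; ring.
- move/negbFE/eqP: Hx => Hx; rewrite Hx.
  have : ~~ [&& lam != 0, Qf x != 0, allE x & allD x] by rewrite -inS Hx eqxx.
  rewrite hl /=; case: (Qf x != 0); case: (allE x); case: (allD x) => //= _;
   rewrite ?mulr0 ?mul0r //.
Qed.

End Mult.

Lemma sq_neq (a b : C) : a ^+ 2 = b ^+ 2 -> a != b -> a = - b.
Proof.
move=> H Hne; have : (a - b) * (a + b) = 0.
  by rewrite mulrDr !mulrBl -!expr2 H (mulrC b a); ring.
move/eqP; rewrite mulf_eq0 subr_eq0 (negbTE Hne) /= addr_eq0 => /eqP //.
Qed.

Section Witness.
Variables (w : assign n) (r1 r2 : 'I_n).
Hypotheses (Hw : f w != 0) (Hnc : ~~ connect e r1 r2)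
  (H1 : f (flip w (comp r1)) != 0) (H2 : f (flip w (comp r2)) != 0)
  (Hne : f w * f (flip (flip w (comp r1)) (comp r2)) !=
         f (flip w (comp r1)) * f (flip w (comp r2))).

Local Notation C1 := (comp r1).
Local Notation C2 := (comp r2).

Lemma r1C1 : r1 \in C1. Proof. by rewrite inE connect0. Qed.
Lemma r2C2 : r2 \in C2. Proof. by rewrite inE connect0. Qed.
Lemma disj i : i \in C1 -> i \in C2 -> False.
Proof.
rewrite !inE => h1 h2; move/negP: Hnc; apply.
by apply: connect_trans h1 _; rewrite csym.
Qed.
Lemma r1nC2 : r1 \in C2 = false.
Proof. by apply/negP => h; apply: (disj r1C1 h). Qed.
Lemma r2nC1 : r2 \in C1 = false.
Proof. by apply/negP => h; apply: (disj h r2C2). Qed.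

Definition pab (a b : bool) : assign n :=
  [ffun i => w i (+) (a && (i \in C1)) (+) (b && (i \in C2))].

Lemma pab00 : pab false false = w.
Proof. by apply/ffunP => i; rewrite !ffunE ?addbF. Qed.
Lemma pab10 : pab true false = flip w C1.
Proof. by apply/ffunP => i; rewrite !ffunE ?addbF. Qed.
Lemma pab01 : pab false true = flip w C2.
Proof. by apply/ffunP => i; rewrite !ffunE ?addbF. Qed.
Lemma pab11 : pab true true = flip (flip w C1) C2.
Proof. by apply/ffunP => i; rewrite !ffunE ?addbF. Qed.

Lemma pS a b : f (pab a b) != 0.
Proof.
case: a; case: b; rewrite ?pab00 ?pab10 ?pab01 ?pab11 //.
have [hE hD] := Sall Hw.
apply: (mixS H1 H2); rewrite ?K_flipE ?K_flipD //; try exact: comp_closed.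
move=> i; rewrite !ffunE.
case h1: (i \in C1); case h2: (i \in C2); rewrite ?addbF; auto.
by case: (disj h1 h2).
Qed.

Lemma cross : f (pab false false) * f (pab true true) =
  - (f (pab true false) * f (pab false true)).
Proof.
apply: sq_neq; last by rewrite pab00 pab10 pab01 pab11.
have Hs y : f y != 0 -> f y ^+ 2 = lam * Qf y.
  by move=> Hy; rewrite Hsq; move: Hy; rewrite inS => /and4P [_ _ -> ->]; rewrite /= !mulr1.
rewrite !exprMn !Hs ?pS // mulrACA [RHS]mulrACA.
have -> : Qf (pab false false) * Qf (pab true true) = Qf (pab true false) * Qf (pab false true).
  rewrite /Qf -!big_split /=; apply: eq_bigr => u _; rewrite !ffunE.
  case h1: (u.1 \in C1); case h2: (u.1 \in C2); rewrite /= ?addbF ?addbT //.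
  - by case: (disj h1 h2).
  - by rewrite mulrC.
  - by rewrite mulrC.
Qed.


Definition Tp : {pred 'I_n} := fun i => (i \in C1) || (i \in C2).
Definition m := #|Tp|.
Definition sigma (j : 'I_m) : 'I_n := enum_val j.

Lemma sigma_inj : injective sigma.
Proof. exact: enum_val_inj. Qed.
Lemma sigmaT j : (sigma j \in C1) || (sigma j \in C2).
Proof. exact: (enum_valP j). Qed.
Lemma sigma_onto i : (i \in C1) || (i \in C2) -> exists j, sigma j = i.
Proof. move=> Hi; have Hi' : i \in Tp by []. by exists (enum_rank_in Hi' i); rewrite /sigma enum_rankK_in. Qed.

Definition ext (y : assign m) : assign n :=
  [ffun i => if [pick j | sigma j == i] is Some j then y j else w i].
Definition h : fn R m := fun y => f (ext y).

Lemma ext_sigma y j : ext y (sigma j) = y j.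
Proof.
rewrite ffunE; case: pickP => [j' /eqP /sigma_inj -> // | /(_ j)].
by rewrite eqxx.
Qed.
Lemma ext_out y i : (i \in C1) || (i \in C2) = false -> ext y i = w i.
Proof.
move=> Hi; rewrite ffunE; case: pickP => [j' /eqP Hj | //].
by move: (sigmaT j'); rewrite Hj Hi.
Qed.


Definition yab (a b : bool) : assign m := [ffun j => pab a b (sigma j)].

Lemma notT i : (i \in C1) || (i \in C2) = false -> forall a b, pab a b i = w i.
Proof. by move=> /norP [/negbTE h1 /negbTE h2] a b; rewrite ffunE h1 h2 !andbF !addbF. Qed.

Lemma ext_yab a b : ext (yab a b) = pab a b.
Proof.
apply/ffunP => i; case Hi: ((i \in C1) || (i \in C2)).
- by have [j <-] := sigma_onto Hi; rewrite ext_sigma ffunE.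
- by rewrite ext_out // notT.
Qed.

Lemma yab_val a b k : yab a b k = w (sigma k) (+) (if sigma k \in C1 then a else b).
Proof.
rewrite !ffunE; case h1: (sigma k \in C1).
- have h2 : (sigma k \in C2) = false by apply/negP => h2; apply: (disj h1 h2).
  by rewrite h2 andbT andbF addbF.
- have h2 : sigma k \in C2 by move: (sigmaT k); rewrite h1.
  by rewrite h2 andbT andbF addbF.
Qed.

Lemma yab_in a b : yab a b \in supp h.
Proof. by rewrite inE /h ext_yab pS. Qed.

Lemma suppE y : y \in supp h -> exists a b, y = yab a b.
Proof.
rewrite inE /h => Hy.
have [hE hD] := Sall Hy; have [wE wD] := Sall Hw.
have Hcl := diff_closed hE hD wE wD.
have HW k : (k \in [set i | ext y i != w i]) = (ext y k != w k) by rewrite inE.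
exists (ext y r1 != w r1), (ext y r2 != w r2).
apply/ffunP => j; rewrite -ext_sigma [yab _ _ _]ffunE [pab _ _ _]ffunE.
have := sigmaT j; set i := sigma j => Hi.
case h1: (i \in C1).
- have h2 : (i \in C2) = false by apply/negP => h2; apply: (disj h1 h2).
  have Hc : connect e r1 i by move: h1; rewrite inE.
  have := closedA_connect Hcl Hc; rewrite !HW => ->.
  by rewrite h2 andbT andbF addbF; case: (ext y i); case: (w i).
- have h2 : i \in C2 by move: Hi; rewrite h1.
  have Hc : connect e r2 i by move: h2; rewrite inE.
  have := closedA_connect Hcl Hc; rewrite !HW => ->.
  by rewrite h2 andbT andbF addbF; case: (ext y i); case: (w i).
Qed.


Definition bbv (t : 'I_2) : assign m :=
  if t == ord0 then [ffun j => sigma j \in C1] else [ffun j => sigma j \in C2].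
Definition Vs : {set assign m} := [set lincomb bbv s | s : assign 2].

Lemma axor_lin s : axor (yab false false) (lincomb bbv s) = yab (s ord0) (s o1).
Proof.
apply/ffunP => j; rewrite [axor _ _ _]ffunE lincomb2 /bbv o1_neq0 eqxx !ffunE.
by case: (s ord0); case: (s o1); case: (sigma j \in C1); case: (sigma j \in C2);
  case: (w (sigma j)).
Qed.

Lemma Vlin : lin_subspace Vs.
Proof.
split.
- apply/imsetP; exists (azero 2) => //; apply/ffunP => j.
  by rewrite lincomb2 !ffunE.
- move=> u v /imsetP [s _ ->] /imsetP [s' _ ->]; apply/imsetP; exists (axor s s') => //.
  apply/ffunP => j; rewrite [axor _ _ _]ffunE !lincomb2 !ffunE.
  by case: (s ord0); case: (s o1); case: (s' ord0); case: (s' o1);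
    case: (sigma j \in C1); case: (sigma j \in C2).
Qed.

Lemma supp_eq : supp h = [set axor (yab false false) v | v in Vs].
Proof.
apply/setP => y; apply/idP/imsetP.
- move=> /suppE [a [b ->]]; exists (lincomb bbv (mk2 a b)).
  + by apply/imsetP; exists (mk2 a b).
  + by rewrite axor_lin mk2_0 mk2_1.
- move=> [v /imsetP [s _ ->] ->]; rewrite axor_lin; exact: yab_in.
Qed.

Lemma lin_inj : injective (lincomb bbv).
Proof.
move=> s s' H.
have [j1 Hj1] := sigma_onto (introT orP (or_introl r1C1)).
have [j2 Hj2] := sigma_onto (introT orP (or_intror r2C2)).
have := congr1 (fun y : assign m => y j1) H; have := congr1 (fun y : assign m => y j2) H.
rewrite /= !lincomb2 /bbv o1_neq0 eqxx !ffunE Hj1 Hj2 r1C1 r2C2 r1nC2 r2nC1 !andbT !andbF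
  ?addbF ?addFb => e2 e1.
by rewrite (mk2E s) (mk2E s') e1 e2.
Qed.

Lemma rank_h : rank h 2.
Proof.
split.
- exists (yab false false), Vs; split; [exact: Vlin | exact: supp_eq].
- exists (yab false false), Vs, bbv; split; [exact: Vlin | split; [exact: supp_eq | split => //]].
  exact: lin_inj.
Qed.


Lemma free_ex : exists jj : 'I_2 -> 'I_m, free_vars h jj.
Proof.
have [j1 Hj1] := sigma_onto (introT orP (or_introl r1C1)).
have [j2 Hj2] := sigma_onto (introT orP (or_intror r2C2)).
exists (fun t => if t == ord0 then j1 else j2); split.
- move=> t t'; case: (ord2_cases t) => ->; case: (ord2_cases t') => -> //;
    rewrite eqxx o1_neq0 => Hjj; exfalso; move/negP: Hnc; apply.
  + by rewrite -Hj1 -Hj2 Hjj connect0.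
  + by rewrite -Hj1 -Hj2 Hjj connect0.
- move=> y; exists (yab (y ord0 (+) w r1) (y o1 (+) w r2)); split.
  + split; first exact: yab_in.
    move=> t; case: (ord2_cases t) => ->; rewrite ?eqxx ?o1_neq0 yab_val ?Hj1 ?Hj2 ?r1C1 ?r2nC1.
    * by case: (y ord0); case: (w r1).
    * by case: (y o1); case: (w r2).
  + move=> x [/suppE [a [b ->]] Ht].
    have := Ht ord0; have := Ht o1; rewrite eqxx o1_neq0 !yab_val Hj1 Hj2 r1C1 r2nC1 => <- <-.
    by clear Ht; case: a; case: b; case: (w r1); case: (w r2).
Qed.

Lemma kinds j : free_vars h j -> (sigma (j o1) \in C1) = ~~ (sigma (j ord0) \in C1).
Proof.
move=> [_ Hf].
have [x [[Hx Ht] _]] := Hf (mk2 (w (sigma (j ord0))) (~~ w (sigma (j o1)))).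
have [a [b Ex]] := suppE Hx; subst x.
have := Ht ord0; have := Ht o1; rewrite !yab_val mk2_0 mk2_1; clear Ht Hx.
by case: (sigma (j ord0) \in C1); case: (sigma (j o1) \in C1); case: a; case: b;
  case: (w (sigma (j ord0))); case: (w (sigma (j o1))).
Qed.

Definition aa (j : 'I_2 -> 'I_m) (y : assign 2) :=
  if sigma (j ord0) \in C1 then y ord0 (+) w (sigma (j ord0)) else y o1 (+) w (sigma (j o1)).
Definition bv (j : 'I_2 -> 'I_m) (y : assign 2) :=
  if sigma (j ord0) \in C1 then y o1 (+) w (sigma (j o1)) else y ord0 (+) w (sigma (j ord0)).

Lemma compE j (Hj : free_vars h j) y : compressed h j y = f (pab (aa j y) (bv j y)).
Proof.
have Hk := kinds Hj.
rewrite /compressed; case: pickP => [x /andP [Hx /forallP Ht] | Hn].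
- have [a [b Ex]] := suppE Hx; subst x.
  rewrite /h ext_yab.
  have := eqP (Ht ord0); have := eqP (Ht o1); rewrite !yab_val Hk /aa /bv.
  clear Ht Hx; case: (sigma (j ord0) \in C1) => /= <- <-;
  by case: a; case: b; case: (w (sigma (j ord0))); case: (w (sigma (j o1))).
- exfalso; have := Hn (yab (aa j y) (bv j y)); rewrite yab_in /=; move/negP; apply.
  apply/forallP => t; case: (ord2_cases t) => ->; rewrite yab_val ?Hk /aa /bv;
  case: (sigma (j ord0) \in C1) => /=;
  by case: (y ord0); case: (y o1); case: (w (sigma (j ord0))); case: (w (sigma (j o1))).
Qed.

Lemma Gc c0 c1 : f (pab c0 c1) * f (pab (~~ c0) (~~ c1)) =
  - (f (pab c0 (~~ c1)) * f (pab (~~ c0) c1)).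
Proof.
have Hc := cross.
case: c0; case: c1 => /=.
- by rewrite mulrC Hc.
- by rewrite [X in _ = - X]mulrC Hc opprK.
- by rewrite Hc opprK mulrC.
- by rewrite Hc [X in _ = - X]mulrC.
Qed.

Lemma gcross j (Hj : free_vars h j) :
  compressed h j (mk2 false false) * compressed h j (mk2 true true) =
  - (compressed h j (mk2 false true) * compressed h j (mk2 true false)).
Proof.
rewrite !compE // /aa /bv !mk2_0 !mk2_1.
case: (sigma (j ord0) \in C1); rewrite !addFb !addTb.
- exact: Gc.
- by rewrite Gc [X in - X]mulrC.
Qed.

Lemma linpartE j (Hj : free_vars h j) k d : linpart h j k d =
  (d == if (sigma k \in C1) == (sigma (j ord0) \in C1) then mk2 true false else mk2 false true).
Proof.
have Hk := kinds Hj.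
apply/existsP/eqP => [[ee /forallP H] | ->].
- have H' a b := implyP (H (yab a b)) (yab_in a b).
  have := H' false false; have := H' true false; have := H' false true.
  rewrite !bigx2 !yab_val Hk => HH3 HH2 HH1; rewrite (mk2E d); move: HH1 HH2 HH3; clear H' H.
  move: (d ord0) (d o1) => d0 d1.
  by case: (sigma k \in C1); case: (sigma (j ord0) \in C1); case: d0; case: d1; case: ee;
    case: (w (sigma k)); case: (w (sigma (j ord0))); case: (w (sigma (j o1))).
- exists (w (sigma k) (+) (if (sigma k \in C1) == (sigma (j ord0) \in C1)
                            then w (sigma (j ord0)) else w (sigma (j o1)))).
  apply/forallP => x; apply/implyP => /suppE [a [b ->]].
  rewrite bigx2 !yab_val Hk.
  case: (sigma k \in C1); case: (sigma (j ord0) \in C1) => /=; rewrite ?mk2_0 ?mk2_1;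
  by case: a; case: b; case: (w (sigma k)); case: (w (sigma (j ord0))); case: (w (sigma (j o1))).
Qed.

Lemma ess (j : 'I_2 -> 'I_m) (Hj : free_vars h j) : ess_arity h j = 2%N.
Proof.
have Hk := kinds Hj.
rewrite /ess_arity (_ : [set d | _] = [set mk2 true false; mk2 false true]);
  first by rewrite cards2 mk2_eq.
apply/setP => d; rewrite !inE; apply/idP/idP.
- case/andP => _ /existsP [k]; rewrite linpartE // => /eqP ->.
  by case: ifP => _; rewrite eqxx ?orbT.
- case/orP => /eqP ->; apply/andP; split.
  + by apply/eqP => /(congr1 (fun y : assign 2 => y ord0)); rewrite !ffunE.
  + by apply/existsP; exists (j ord0); rewrite linpartE // eqxx.
  + by apply/eqP => /(congr1 (fun y : assign 2 => y o1)); rewrite !ffunE.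
  + apply/existsP; exists (j o1); rewrite linpartE // Hk.
    by case: (sigma (j ord0) \in C1).
Qed.

End Witness.
End Struct.

Unset Implicit Arguments.

Theorem lemma4p14 (R : realType) (n : nat) (f : fn R n) :
  ~ inP f -> inP (fsq f) ->
  exists (m : nat) (h : fn R m),
    pinning f h /\ rank h 2 /\
    (exists j : 'I_2 -> 'I_m, free_vars h j) /\
    forall j : 'I_2 -> 'I_m, free_vars h j ->
      [/\ ess_arity h j = 2%N,
          ~ inP (compressed h j),
          inP (fsq (compressed h j)) &
          forall y, compressed h j y != 0].
Proof.
move=> HnP [lam [U [E [D Hf2]]]].
have Hsq : forall x, f x ^+ 2 = lam * Qf U x * (allE E x)%:R * (allD D x)%:R.
  by move=> x; have := Hf2 x; rewrite /fsq !prod_nat.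
case: (classic (exists z, f z != 0)) => [[z Hz] | Hnz]; last first.
  exfalso; apply: HnP; exists 0, [::], [::], [::] => x; rewrite !mul0r.
  by apply/eqP; apply/negPn/negP => H; apply: Hnz; exists x.
case: (classic (exists w r1 r2, [/\ f w != 0, ~~ connect (e E D) r1 r2,
    f (flip w (comp E D r1)) != 0, f (flip w (comp E D r2)) != 0 &
    f w * f (flip (flip w (comp E D r1)) (comp E D r2)) !=
    f (flip w (comp E D r1)) * f (flip w (comp E D r2))])) =>
  [[w [r1 [r2 [Hw Hnc H1 H2 Hne]]]] | Hno]; last first.
  exfalso; apply: HnP; apply: (fP Hsq Hz) => w r1 r2 Hw Hnc H1 H2.
  apply/eqP/negPn/negP => Hne; apply: Hno; exists w, r1, r2; by split.
exists (m E D r1 r2), (@h R n f E D w r1 r2).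
have Hnz (j : 'I_2 -> 'I_(m E D r1 r2)) : free_vars (@h R n f E D w r1 r2) j ->
    forall y, compressed (@h R n f E D w r1 r2) j y != 0.
  by move=> Hj y; rewrite (compE Hsq Hw Hnc H1 H2 Hj) (pS Hsq Hw Hnc H1 H2).
split; [|split; [|split]].
- by exists (@sigma n E D r1 r2), w; split; [exact: sigma_inj | ].
- exact: (rank_h Hsq Hw Hnc H1 H2).
- exact: (free_ex Hsq Hw Hnc H1 H2).
- move=> j Hj; split.
  + exact: (ess Hsq Hw Hnc H1 H2 Hj).
  + move=> HP; have Hc := binP_cross HP (Hnz j Hj).
    have Hg := gcross Hsq Hw Hnc H1 H2 Hne Hj.
    set X := compressed _ j (mk2 false true) * compressed _ j (mk2 true false) in Hc Hg.
    have HX : X != 0 by rewrite mulf_neq0 ?Hnz.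
    have : X *+ 2 == 0 by rewrite mulr2n -{1}Hc Hg addNr.
    by rewrite mulrn_eq0 /= (negbTE HX).
  + apply: binP_sq; first exact: Hnz.
    exact: (gcross Hsq Hw Hnc H1 H2 Hne Hj).
  + exact: Hnz.
Qed.
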